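(* For every base $\mathcal{B}$, atomic multisets $L,K$ and ILL formulae $\varphi,\psi,\chi$: if $\Vdash^L_{\mathcal{B}}\varphi\otimes\psi$ and $\varphi,\psi\Vdash^K_{\mathcal{B}}\chi$, then $\Vdash^{L,K}_{\mathcal{B}}\chi$.
   Context: Fix a set $\mathbb{A}$ of propositional atoms. ILL formulae: $\phi ::= p\in\mathbb{A} \mid \top \mid 0 \mid 1 \mid \phi\multimap\phi \mid \phi\otimes\phi \mid \phi\,\&\,\phi \mid \phi\oplus\phi \mid\ !\phi$. All multisets are finite; ''$\Gamma,\Delta$'' denotes multiset union. Atomic rules and bases: an atomic sequent is $P\Rightarrow p$ with $P$ a multiset of atoms, $p$ an atom. An atomic box is a multiset of atomic sequents. An atomic rule is a triple $\langle\mathbf{A},\mathbf{S},p\rangle$ with $\mathbf{A}$ a multiset of atomic boxes, $\mathbf{S}$ an atomic box, $p$ an atom. A base is a set of atomic rules. An atom $p$ is persistent in $\mathcal{B}$ if some $\langle\varnothing,\mathbf{S},p\rangle\in\mathcal{B}$ has $\mathbf{S}\neq\varnothing$. Derivability $\vdash_{\mathcal{B}}$: (Ref) $p\vdash_{\mathcal{B}}p$; (App) if $\langle\mathbf{A},\mathbf{S},p\rangle\in\mathcal{B}$ with $\mathbf{A}=\{\mathbf{T}_1,\dots,\mathbf{T}_m\}$, and there are atomic multisets $C_1,\dots,C_n$ ($n\ge m$) and a multiset $D=\{d_{m+1},\dots,d_n\}$ of atoms persistent in $\mathcal{B}$ such that $C_i,Q\vdash_{\mathcal{B}}q$ for every $i\le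 m$ and every $Q\Rightarrow q\in\mathbf{T}_i$, $C_j\vdash_{\mathcal{B}}d_j$ for every $m<j\le n$, and $D,U\vdash_{\mathcal{B}}v$ for every $U\Rightarrow v\in\mathbf{S}$, then $C_1,\dots,C_n\vdash_{\mathcal{B}}p$. Support $\Vdash^L_{\mathcal{B}}$ (base $\mathcal{B}$, atomic multiset $L$), by induction on formulae: $\Vdash^L_{\mathcal{B}}p$ iff $L\vdash_{\mathcal{B}}p$; $\Vdash^L_{\mathcal{B}}\varphi\multimap\psi$ iff $\varphi\Vdash^L_{\mathcal{B}}\psi$; $\Vdash^L_{\mathcal{B}}\varphi\otimes\psi$ iff for all $\mathcal{C}\supseteq\mathcal{B}$, atomic $K$, atoms $p$: if $\varphi,\psi\Vdash^K_{\mathcal{C}}p$ then $\Vdash^{L,K}_{\mathcal{C}}p$; $\Vdash^L_{\mathcal{B}}1$ iff for all $\mathcal{C}\supseteq\mathcal{B}$, $K$, $p$: if $\Vdash^K_{\mathcal{C}}p$ then $\Vdash^{L,K}_{\mathcal{C}}p$; $\Vdash^L_{\mathcal{B}}\varphi\&\psi$ iff $\Vdash^L_{\mathcal{B}}\varphi$ and $\Vdash^L_{\mathcal{B}}\psi$; $\Vdash^L_{\mathcal{B}}\varphi\oplus\psi$ iff for all $\mathcal{C}\supseteq\mathcal{B}$, $K$, $p$: if $\varphi\Vdash^K_{\mathcal{C}}p$ and $\psi\Vdash^K_{\mathcal{C}}p$ then $\Vdash^{L,K}_{\mathcal{C}}p$; $\Vdash^L_{\mathcal{B}}0$ iff $\Vdash^{L,K}_{\mathcal{B}}p$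 for all atoms $p$ and atomic $K$; $\Vdash^L_{\mathcal{B}}\top$ always; $\Vdash^L_{\mathcal{B}}!\varphi$ iff for all $\mathcal{C}\supseteq\mathcal{B}$, $K$, $p$: if (for all $\mathcal{D}\supseteq\mathcal{C}$, $\Vdash^{\varnothing}_{\mathcal{D}}\varphi$ implies $\Vdash^K_{\mathcal{D}}p$) then $\Vdash^{L,K}_{\mathcal{C}}p$. For nonempty multisets: $\Vdash^L_{\mathcal{B}}\Gamma,\Delta$ iff $L=K,M$ with $\Vdash^K_{\mathcal{B}}\Gamma$ and $\Vdash^M_{\mathcal{B}}\Delta$. For a nonempty antecedent written $!\Delta,\Theta$, where $!\Delta$ collects the formulae with top-level connective $!$ (with $\Delta$ the formulae under those $!$) and $\Theta$ contains none: $!\Delta,\Theta\Vdash^L_{\mathcal{B}}\varphi$ iff for all $\mathcal{C}\supseteq\mathcal{B}$ and atomic $K$, if $\Vdash^{\varnothing}_{\mathcal{C}}\delta$ for every $\delta\in\Delta$ and $\Vdash^K_{\mathcal{C}}\Theta$ then $\Vdash^{L,K}_{\mathcal{C}}\varphi$ (when $\Theta$ is empty, $K$ is empty). An empty antecedent: $\varnothing\Vdash^L_{\mathcal{B}}\varphi$ means $\Vdash^L_{\mathcal{B}}\varphi$. *)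

(* Defs.v *)
(* base support semantics for ILL (atomic multisets as lists up to Permutation). *)
From Stdlib Require Import List Permutation.
Import ListNotations.
Set Implicit Arguments.

Section BeS.
Variable Atom : Type.

Definition aseq := (list Atom * Atom)%type.
Definition abox := list aseq.
Definition arule := (list abox * abox * Atom)%type.
Definition base := arule -> Prop.

Definition ext (B C : base) : Prop := forall r, B r -> C r.

Definition persistent (B : base) (p : Atom) : Prop :=
  exists S : abox, B ([], S, p) /\ S <> [].

(* derivability  L |-_B p ; multiset union is list concatenation up to Permutation *)
Inductive deriv (B : base) : list Atom -> Atom -> Prop :=
| d_ref (p : Atom) : deriv B [p] p
| d_app (A : list abox) (S : abox) (p : Atom)
        (Cs : list (list Atom))            (* C_1 .. C_m, matched with T_1 .. T_m *)
        (Ds : list (list Atom * Atom))     (* (C_j, d_j), m < j <= n *)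
        (L : list Atom) :
    B (A, S, p) ->
    length Cs = length A ->
    (forall i, i < length A ->
       forall Q q, In (Q, q) (nth i A []) -> deriv B (nth i Cs [] ++ Q) q) ->
    (forall C d, In (C, d) Ds -> persistent B d /\ deriv B C d) ->
    (forall U v, In (U, v) S -> deriv B (map snd Ds ++ U) v) ->
    Permutation L (concat Cs ++ concat (map fst Ds)) ->
    deriv B L p.

Inductive formula : Type :=
| Var (p : Atom)
| Top
| Zero
| One
| Lolli (a b : formula)
| Tensor (a b : formula)
| With (a b : formula)
| Plus (a b : formula)
| Bang (a : formula).

Definition pred := base -> list Atom -> Prop.

Fixpoint multi (ps : list pred) (C : base) (K : list Atom) : Prop :=
  match ps with
  | [] => K = []
  | P :: ps' => exists K1 K2, Permutation K (K1 ++ K2) /\ P C K1 /\ multi ps' C K2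
  end.

(* A piece for a formula !d requires
   d to be supported at C with the empty multiset and consumes no atoms;
   a piece for a non-! formula is its support with its share of K. *)
Definition ant_supp (ps : list pred) (B : base) (L : list Atom) (concl : pred) : Prop :=
  forall C, ext B C -> forall K, multi ps C K -> concl C (L ++ K).

Definition dup (s : pred) : pred * pred := (s, s).

(* (support, antecedent-piece) of a formula *)
Fixpoint sp (phi : formula) : pred * pred :=
  match phi with
  | Var p => dup (fun B L => deriv B L p)
  | Lolli a b => dup (fun B L => ant_supp [(snd (sp a))] B L (fst (sp b)))
  | Tensor a b => dup (fun B L =>
      forall C, ext B C -> forall K p,
        ant_supp [(snd (sp a)); (snd (sp b))] C K (fun C' L' => deriv C' L' p) ->
        deriv C (L ++ K) p)
  | One => dup (fun B L =>
      forall C, ext B C -> forall K p, deriv C K p -> deriv C (L ++ K) p)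
  | With a b => dup (fun B L => (fst (sp a)) B L /\ (fst (sp b)) B L)
  | Plus a b => dup (fun B L =>
      forall C, ext B C -> forall K p,
        ant_supp [(snd (sp a))] C K (fun C' L' => deriv C' L' p) ->
        ant_supp [(snd (sp b))] C K (fun C' L' => deriv C' L' p) ->
        deriv C (L ++ K) p)
  | Zero => dup (fun B L => forall p K, deriv B (L ++ K) p)
  | Top => dup (fun _ _ => True)
  | Bang a =>
      ((fun B L =>
         forall C, ext B C -> forall K p,
           (forall D, ext C D -> (fst (sp a)) D [] -> deriv D K p) ->
           deriv C (L ++ K) p),
       (fun C K => K = [] /\ (fst (sp a)) C []))
  end.

Definition supp (phi : formula) (B : base) (L : list Atom) : Prop := (fst (sp phi)) B L.

Definition asupp (Gamma : list formula) (B : base) (L : list Atom) (phi : formula) : Prop :=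
  match Gamma with
  | [] => supp phi B L
  | _ => ant_supp (map (fun g => (snd (sp g))) Gamma) B L (fst (sp phi))
  end.

End BeS.

(* Main.v *)
Require Import Defs.
From Stdlib Require Import List Permutation.
Import ListNotations.

Section S.
Variable Atom : Type.

Lemma ext_refl (B : base Atom) : ext B B.
Proof. intros r H; exact H. Qed.

Lemma ext_trans (B C D : base Atom) : ext B C -> ext C D -> ext B D.
Proof. intros H1 H2 r H; apply H2, H1, H. Qed.

Lemma deriv_perm (B : base Atom) L p : deriv B L p -> forall L', Permutation L L' -> deriv B L' p.
Proof.
  intros H L' HP. destruct H as [p|A S0 p Cs Ds L0 HB Hl H1 H2 H3 HP0].
  - apply Permutation_length_1_inv in HP. subst. constructor.
  - eapply d_app; eauto. eapply Permutation_trans; [apply Permutation_sym, HP|exact HP0].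
Qed.

Lemma pers_mono (B C : base Atom) d : ext B C -> persistent B d -> persistent C d.
Proof. intros He [S0 [HS HS']]. exists S0; split; [apply He, HS|exact HS']. Qed.

Fixpoint deriv_mono (B C : base Atom) (He : ext B C) L p (H : deriv B L p) {struct H} : deriv C L p :=
  match H with
  | @d_ref _ _ p => @d_ref _ C p
  | @d_app _ _ A S0 p Cs Ds L0 HB Hl H1 H2 H3 HP =>
      @d_app _ C A S0 p Cs Ds L0 (He _ HB) Hl
        (fun i hi Q q hin => deriv_mono _ _ He _ _ (H1 i hi Q q hin))
        (fun C0 d hin => match H2 C0 d hin with conj hp hd => conj (pers_mono _ _ _ He hp) (deriv_mono _ _ He _ _ hd) end)
        (fun U v hin => deriv_mono _ _ He _ _ (H3 U v hin)) HP
  end.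

Lemma supp_mono_perm (phi : formula Atom) :
  (forall B C, ext B C -> forall L, fst (sp phi) B L -> fst (sp phi) C L) /\
  (forall B L, fst (sp phi) B L -> forall L', Permutation L L' -> fst (sp phi) B L').
Proof.
  induction phi as [p| | | |a [IHa1 IHa2] b [IHb1 IHb2]|a _ b _|a [IHa1 IHa2] b [IHb1 IHb2]|a _ b _|a [IHa1 IHa2]];
    simpl; split.
  - intros B C He L H. exact (deriv_mono _ _ He _ _ H).
  - intros B L H L' HP. eapply deriv_perm; eauto.
  - auto.
  - auto.
  - intros B C He L H p K. exact (deriv_mono _ _ He _ _ (H p K)).
  - intros B L H L' HP p K. eapply deriv_perm; [apply H|]. apply Permutation_app_tail, HP.
  - intros B C He L H C' He'. apply H. eapply ext_trans; eauto.
  - intros B L H L' HP C He K p Hd. eapply deriv_perm; [apply H; eauto|]. apply Permutation_app_tail, HP.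
  - intros B C He L H C' He'. apply H. eapply ext_trans; eauto.
  - intros B L H L' HP C He K HK. eapply IHb2; [apply H; eauto|]. apply Permutation_app_tail, HP.
  - intros B C He L H C' He'. apply H. eapply ext_trans; eauto.
  - intros B L H L' HP C He K p Hd. eapply deriv_perm; [apply H; eauto|]. apply Permutation_app_tail, HP.
  - intros B C He L [H1 H2]. split; eauto.
  - intros B L [H1 H2] L' HP. split; eauto.
  - intros B C He L H C' He'. apply H. eapply ext_trans; eauto.
  - intros B L H L' HP C He K p H1 H2. eapply deriv_perm; [apply H; eauto|]. apply Permutation_app_tail, HP.
  - intros B C He L H C' He'. apply H. eapply ext_trans; eauto.
  - intros B L H L' HP C He K p Hd. eapply deriv_perm; [apply H; eauto|]. apply Permutation_app_tail, HP.
Qed.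

Lemma piece_mono (phi : formula Atom) B C : ext B C -> forall L, snd (sp phi) B L -> snd (sp phi) C L.
Proof.
  intros He L H. destruct (supp_mono_perm phi) as [M _].
  destruct phi; simpl in *; try exact (M _ _ He _ H); auto.
  destruct H as [H1 H2]. split; auto.
  destruct (supp_mono_perm phi) as [M' _]. eauto.
Qed.

Lemma piece_perm (phi : formula Atom) B L : snd (sp phi) B L -> forall L', Permutation L L' -> snd (sp phi) B L'.
Proof.
  intros H L' HP. destruct (supp_mono_perm phi) as [_ M].
  destruct phi; simpl in *; try exact (M _ _ H _ HP); auto.
  destruct H as [H1 H2]. subst. apply Permutation_nil in HP. subst. split; auto.
Qed.

Lemma multi_mono (ps : list (formula Atom)) B C : ext B C -> forall K,
  multi (map (fun g => snd (sp g)) ps) B K -> multi (map (fun g => snd (sp g)) ps) C K.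
Proof.
  intros He. induction ps as [|g ps IH]; simpl; auto.
  intros K [K1 [K2 [HP [H1 H2]]]]. exists K1, K2. split; [exact HP|split].
  - eapply piece_mono; eauto.
  - apply IH, H2.
Qed.

Lemma suppP (phi : formula Atom) B L L' : supp phi B L -> Permutation L L' -> supp phi B L'.
Proof. intros H HP. destruct (supp_mono_perm phi) as [_ M]. eapply M; eauto. Qed.

Lemma suppM (phi : formula Atom) B C L : ext B C -> supp phi B L -> supp phi C L.
Proof. intros He H. destruct (supp_mono_perm phi) as [M _]. eapply M; eauto. Qed.

End S.

Ltac pm := rewrite <- ?app_assoc; try reflexivity; apply Permutation_app_head, Permutation_app_comm.

Theorem lemma5 (Atom : Type) (B : base Atom) (L K : list Atom)
  (phi psi chi : formula Atom) :
  supp (Tensor phi psi) B L ->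
  asupp [phi; psi] B K chi ->
  supp chi B (L ++ K).
Proof.
  revert B L K. induction chi as [p| | | |a _ b IHb|a _ b _|a IHa b IHb|a _ b _|a _];
    intros B L K HT HA; unfold asupp, ant_supp in HA; simpl in HA; unfold supp in *; simpl in *.
  - apply HT; [apply ext_refl|]. exact HA.
  - exact I.
  - intros p K0. eapply deriv_perm; [apply (HT B (ext_refl _ _) (K++K0) p)|pm].
    intros C He K2 HM. eapply deriv_perm; [apply (HA C He K2 HM p K0)|pm].
  - intros C He K0 p Hd. eapply deriv_perm; [apply (HT C He (K++K0) p)|pm].
    intros C' He' K2 HM. eapply deriv_perm;
      [apply (HA C' (ext_trans _ _ _ _ He He') K2 HM C' (ext_refl _ _) K0 p (deriv_mono _ _ _ He' _ _ Hd))|pm].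
  - intros C He K0 HM0. eapply suppP; [apply (IHb C L (K++K0))|pm].
    + intros C' He'; apply HT; eapply ext_trans; eauto.
    + unfold asupp, ant_supp; simpl. intros C' He' K2 HM. eapply suppP;
        [apply (HA C' (ext_trans _ _ _ _ He He') K2 HM C' (ext_refl _ _) K0 (multi_mono _ [a] _ _ He' _ HM0))|pm].
  - intros C He K0 p HK0. eapply deriv_perm; [apply (HT C He (K++K0) p)|pm].
    intros C' He' K2 HM. eapply deriv_perm; [apply (HA C' (ext_trans _ _ _ _ He He') K2 HM C' (ext_refl _ _) K0 p)|pm].
    intros C'' He'' K3 HM3; apply HK0; [eapply ext_trans; eauto| exact HM3].
  - split.
    + apply IHa; [exact HT| unfold asupp, ant_supp; simpl; intros C He K2 HM; apply (HA C He K2 HM)].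
    + apply IHb; [exact HT| unfold asupp, ant_supp; simpl; intros C He K2 HM; apply (HA C He K2 HM)].
  - intros C He K0 p HK1 HK2. eapply deriv_perm; [apply (HT C He (K++K0) p)|pm].
    intros C' He' K2 HM. eapply deriv_perm; [apply (HA C' (ext_trans _ _ _ _ He He') K2 HM C' (ext_refl _ _) K0 p)|pm].
    + intros C'' He'' K3 HM3; apply HK1; [eapply ext_trans; eauto| exact HM3].
    + intros C'' He'' K3 HM3; apply HK2; [eapply ext_trans; eauto| exact HM3].
  - intros C He K0 p HK0. eapply deriv_perm; [apply (HT C He (K++K0) p)|pm].
    intros C' He' K2 HM. eapply deriv_perm; [apply (HA C' (ext_trans _ _ _ _ He He') K2 HM C' (ext_refl _ _) K0 p)|pm].
    intros D HD; apply HK0; eapply ext_trans; eauto.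
Qed.
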